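(* Let $U\subseteq V$, let $H=(U,E(U))$ be the induced subgraph with inherited edge weights, and let $f\in\ell^2(V,w)$ be nonnegative with $f(v)=0$ for all $v\notin U$ and $\sum_{v\in U}w_H(v)f(v)^2>0$. Suppose that for every $t>0$, $$w\big(E(V_f(t),V\setminus U)\big)\le w\big(E(V_f(t),U\setminus V_f(t))\big).$$ Then $\sqrt{8\,\mathcal R_H(f)}\ge\mathcal R_G(f)$.
   Context: $G=(V,E,w)$ finite undirected, positive edge weights, $w(v)=\sum_{u\sim v}w(u,v)\ge1$. $E(U)$ is the set of edges with both endpoints in $U$; $w_H(v)=\sum_{u\in U,\{u,v\}\in E}w(u,v)$ for $v\in U$. For disjoint $S,T$, $w(E(S,T))$ is the total weight of edges with one endpoint in $S$ and the other in $T$. $V_f(t)=\{v:f(v)\ge t\}$. $\mathcal R_G(f)=\sum_{\{u,v\}\in E}w(u,v)(f(u)-f(v))^2/\sum_{v\in V}w(v)f(v)^2$ and $\mathcal R_H(f)=\sum_{\{u,v\}\in E(U)}w(u,v)(f(u)-f(v))^2/\sum_{v\in U}w_H(v)f(v)^2$. *)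

(* Defs.v *)
From HB Require Import structures.
From mathcomp Require Import all_boot all_order all_algebra.
Set Implicit Arguments. Unset Strict Implicit. Unset Printing Implicit Defensive.
Import Order.TTheory GRing.Theory Num.Theory.
Local Open Scope ring_scope.

Section Graph.
Variables (R : rcfType) (V : finType) (e : rel V) (wt : V -> V -> R).

Definition weighted_graph : Prop :=
  [/\ (forall u v, e u v = e v u), (forall v, ~~ e v v),
      (forall u v, wt u v = wt v u) & (forall u v, e u v -> 0 < wt u v)].

Definition wdeg (v : V) : R := \sum_(u | e u v) wt u v.

Definition wdegH (U : {set V}) (v : V) : R := \sum_(u in U | e u v) wt u v.

(* w(E(S,T)) for disjoint S, T: each edge counted once (one endpoint in S, other in T) *)
Definition wcut (S T : {set V}) : R :=
  \sum_(u in S) \sum_(v in T | e u v) wt u v.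

Definition superlevel (f : V -> R) (t : R) : {set V} := [set v | t <= f v].

(* sum over unordered edges {u,v} in E = half the sum over ordered adjacent pairs *)
Definition energyG (f : V -> R) : R :=
  (\sum_u \sum_(v | e u v) wt u v * (f u - f v) ^+ 2) / 2%:R.

Definition energyH (U : {set V}) (f : V -> R) : R :=
  (\sum_(u in U) \sum_(v in U | e u v) wt u v * (f u - f v) ^+ 2) / 2%:R.

Definition RayleighG (f : V -> R) : R :=
  energyG f / \sum_v wdeg v * f v ^+ 2.

Definition RayleighH (U : {set V}) (f : V -> R) : R :=
  energyH U f / \sum_(v in U) wdegH U v * f v ^+ 2.

End Graph.

(* Main.v *)
Require Import Defs.
From HB Require Import structures.
From mathcomp Require Import all_boot all_order all_algebra.
From mathcomp Require Import ring lra.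
Import Order.TTheory GRing.Theory Num.Theory.
Local Open Scope ring_scope.

Section LC.
Variable R : rcfType.

Definition lcsum (c : R) (s : seq R) (x : R) :=
  \sum_(pt <- zip (c :: s) s) (pt.2 ^+ 2 - pt.1 ^+ 2) * (if pt.2 <= x then 1 else 0).

Lemma lc_zero c s x : path <%R c s -> x <= c -> lcsum c s x = 0.
Proof.
elim: s c => [|a s IH] c /=; first by rewrite /lcsum big_nil.
move=> /andP [ca ps] xc; rewrite /lcsum /= big_cons /=.
have -> : (a <= x) = false by apply/negbTE; rewrite -ltNge; apply: le_lt_trans ca.
by rewrite mulr0 add0r; apply: IH => //; apply: (le_trans xc); apply: ltW.
Qed.

Lemma lc_val c s x : path <%R c s -> x \in c :: s -> lcsum c s x = x ^+ 2 - c ^+ 2.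
Proof.
elim: s c => [|a s IH] c /=.
  by rewrite inE => _ /eqP ->; rewrite /lcsum big_nil subrr.
move=> /andP [ca ps]; rewrite inE => /orP [/eqP ->|xin].
  by rewrite lc_zero /= ?ca ?ps // subrr.
rewrite /lcsum /= big_cons /=.
have ax : a <= x.
  move: xin; rewrite inE => /orP [/eqP ->//|xs].
  have := order_path_min (@lt_trans _ R) ps => /allP /(_ x xs) /ltW //.
rewrite ax mulr1; have := IH a ps xin; rewrite /lcsum => ->; ring.
Qed.

Lemma lc_pos c s : path <%R c s ->
  all (fun pt : R * R => (c <= pt.1) && (pt.1 < pt.2)) (zip (c :: s) s).
Proof.
elim: s c => [|a s IH] c //= /andP [ca ps].
rewrite lexx ca /=; apply/allP => pt /(allP (IH a ps)) /andP [h1 h2].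
by rewrite h2 andbT (le_trans (ltW ca)).
Qed.

End LC.
Arguments lcsum {R}.
Arguments lc_zero {R}.
Arguments lc_val {R}.
Arguments lc_pos {R}.

Section Aux.
Variables (R : rcfType) (V : finType) (e : rel V) (wt : V -> V -> R).
Hypotheses (esym : forall u v, e u v = e v u) (wsym : forall u v, wt u v = wt v u)
  (wpos : forall u v, e u v -> 0 < wt u v).

Definition W u v := if e u v then wt u v else 0.
Definition T (F : V -> V -> R) := \sum_u \sum_v W u v * F u v.

Lemma W_ge0 u v : 0 <= W u v.
Proof. by rewrite /W; case: ifP => // /wpos /ltW. Qed.

Lemma W_sym u v : W u v = W v u.
Proof. by rewrite /W esym wsym. Qed.

Lemma T_swap F : T F = T (fun u v => F v u).
Proof.
rewrite /T exchange_big; apply: eq_bigr => u _; apply: eq_bigr => v _.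
by rewrite W_sym.
Qed.

Lemma T_add F G : T (fun u v => F u v + G u v) = T F + T G.
Proof.
rewrite /T -big_split; apply: eq_bigr => u _; rewrite -big_split.
by apply: eq_bigr => v _; rewrite mulrDr.
Qed.

Lemma T_scale c F : T (fun u v => c * F u v) = c * T F.
Proof.
rewrite /T big_distrr; apply: eq_bigr => u _; rewrite big_distrr.
by apply: eq_bigr => v _; rewrite mulrCA.
Qed.

Lemma T_le F G : (forall u v, F u v <= G u v) -> T F <= T G.
Proof.
move=> H; rewrite /T; apply: ler_sum => u _; apply: ler_sum => v _.
by apply: ler_wpM2l; [apply: W_ge0 | apply: H].
Qed.

Lemma T_ge0 F : (forall u v, 0 <= F u v) -> 0 <= T F.
Proof.
move=> H; rewrite /T; apply: sumr_ge0 => u _; apply: sumr_ge0 => v _.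
by apply: mulr_ge0; [apply: W_ge0 | apply: H].
Qed.

Lemma T_ext F G : (forall u v, F u v = G u v) -> T F = T G.
Proof. by move=> H; rewrite /T; apply: eq_bigr => u _; apply: eq_bigr => v _; rewrite H. Qed.

Lemma T_sumseq (I : Type) (s : seq I) (c : I -> R) (F : I -> V -> V -> R) :
  \sum_(x <- s) c x * T (F x) = T (fun u v => \sum_(x <- s) c x * F x u v).
Proof.
elim: s => [|x s IH]; first by rewrite big_nil /T; symmetry; apply: big1 => u _;
  apply: big1 => v _; rewrite big_nil mulr0.
rewrite big_cons IH -T_scale -T_add; apply: T_ext => u v; by rewrite big_cons.
Qed.

Lemma T_CS a b : T (fun u v => a u v * b u v) ^+ 2 <=
  T (fun u v => a u v ^+ 2) * T (fun u v => b u v ^+ 2).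
Proof.
set A := T (fun u v => a u v ^+ 2); set B := T (fun u v => b u v ^+ 2);
set C := T (fun u v => a u v * b u v).
have key : forall x, 0 <= x ^+ 2 * A - 2%:R * x * C + B.
  move=> x; have -> : x ^+ 2 * A - 2%:R * x * C + B =
     T (fun u v => (x * a u v - b u v) ^+ 2).
    rewrite (T_ext (fun u v => (x * a u v - b u v) ^+ 2) (fun u v => (x ^+ 2 * a u v ^+ 2 + (- (2%:R * x)) * (a u v * b u v))
       + b u v ^+ 2)); last by move=> u v; ring.
    by rewrite !T_add !T_scale /A /B /C; ring.
  by apply: T_ge0 => u v; apply: sqr_ge0.
have A0 : 0 <= A by apply: T_ge0 => u v; apply: sqr_ge0.
have B0 : 0 <= B by apply: T_ge0 => u v; apply: sqr_ge0.
have [Ap|] := ltP 0 A.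
  have := key (C / A).
  have -> : (C / A) ^+ 2 * A - 2%:R * (C / A) * C + B = (A * B - C ^+ 2) / A.
    by field; rewrite gt_eqF.
  by rewrite pmulr_lge0 ?invr_gt0 // subr_ge0.
move=> Ale; have A00 : A = 0 by apply/eqP; rewrite eq_le Ale A0.
rewrite A00 mul0r.
have := key ((B + 1) / (2%:R * C)); have := key (- (B + 1) / (2%:R * C)).
rewrite A00 !mulr0 !sub0r.
have [->|Cn0] := eqVneq C 0; first by rewrite expr0n.
have -> : - (2%:R * (- (B + 1) / (2%:R * C)) * C) = B + 1 by field; rewrite Cn0.
have -> : - (2%:R * ((B + 1) / (2%:R * C)) * C) = - (B + 1) by field; rewrite Cn0.
lra.
Qed.

Lemma rowsum (P : pred V) (G : V -> R) u :
  \sum_(v | P v && e u v) wt u v * G v = \sum_v W u v * (if P v then G v else 0).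
Proof.
rewrite big_mkcond; apply: eq_bigr => v _; rewrite /W.
by case: (P v); case: (e u v); rewrite /= ?mulr0 ?mul0r.
Qed.

Lemma conv_wcut (S X : {set V}) :
  wcut e wt S X = T (fun u v => if (u \in S) && (v \in X) then 1 else 0).
Proof.
rewrite /wcut /T big_mkcond; apply: eq_bigr => u _.
case: (u \in S) => /=.
  rewrite (eq_bigr (fun v => wt u v * 1)); last by move=> v _; rewrite mulr1.
  by rewrite rowsum.
by symmetry; apply: big1 => v _; rewrite mulr0.
Qed.

Lemma conv_EG (f : V -> R) : energyG e wt f = T (fun u v => (f u - f v) ^+ 2) / 2%:R.
Proof.
rewrite /energyG /T; congr (_ / _); apply: eq_bigr => u _.
by rewrite -(rowsum predT (fun v => (f u - f v) ^+ 2)).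
Qed.

Lemma conv_EH (U : {set V}) (f : V -> R) : energyH e wt U f =
  T (fun u v => if (u \in U) && (v \in U) then (f u - f v) ^+ 2 else 0) / 2%:R.
Proof.
rewrite /energyH /T; congr (_ / _); rewrite big_mkcond; apply: eq_bigr => u _.
case: (u \in U) => /=.
  by rewrite -(rowsum (mem U) (fun v => (f u - f v) ^+ 2)).
by symmetry; apply: big1 => v _; rewrite mulr0.
Qed.

Lemma conv_DG (f : V -> R) : \sum_v wdeg e wt v * f v ^+ 2 = T (fun u v => f v ^+ 2).
Proof.
rewrite /T exchange_big; apply: eq_bigr => v _; rewrite -mulr_suml /wdeg.
congr (_ * _); rewrite big_mkcond; apply: eq_bigr => u _; rewrite /W.
by case: (e u v).
Qed.

Lemma conv_DH (U : {set V}) (f : V -> R) : \sum_(v in U) wdegH e wt U v * f v ^+ 2 =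
  T (fun u v => if (u \in U) && (v \in U) then f v ^+ 2 else 0).
Proof.
rewrite /T exchange_big big_mkcond; apply: eq_bigr => v _.
case: (v \in U) => /=.
  rewrite /wdegH big_mkcond mulr_suml; apply: eq_bigr => u _; rewrite /W.
  by case: (u \in U); case: (e u v); rewrite /= ?mulr0 ?mul0r.
by symmetry; apply: big1 => u _; rewrite andbF mulr0.
Qed.


Lemma main_aux (U : {set V}) (f : V -> R) :
  (forall v, 0 <= f v) ->
  (forall v, v \notin U -> f v = 0) ->
  0 < \sum_(v in U) wdegH e wt U v * f v ^+ 2 ->
  (forall t, 0 < t ->
     wcut e wt (superlevel f t) (~: U) <=
     wcut e wt (superlevel f t) (U :\: superlevel f t)) ->
  RayleighG e wt f <= Num.sqrt (8%:R * RayleighH e wt U f).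
Proof.
move=> fge0 f0 DHpos hcut.
pose a u v := if [&& u \in U, v \in U & f v < f u] then f u - f v else 0.
pose b u v := if [&& u \in U, v \in U & f v < f u] then f u + f v else 0.
have EHa : T (fun u v => a u v ^+ 2) = energyH e wt U f.
  rewrite conv_EH.
  have : T (fun u v => a u v ^+ 2) + T (fun u v => a u v ^+ 2) =
      T (fun u v => if (u \in U) && (v \in U) then (f u - f v) ^+ 2 else 0).
    rewrite {2}T_swap -T_add; apply: T_ext => u v; rewrite /a.
    case: (u \in U); case: (v \in U) => //=; try by rewrite expr0n /= addr0.
    case: ltgtP => h /=; rewrite ?expr0n /= ?add0r ?addr0 //; first by ring.
    by rewrite h subrr expr0n.
  move=> H; lra.
have Hb : T (fun u v => b u v ^+ 2) <= 2%:R * \sum_(v in U) wdegH e wt U v * f v ^+ 2.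
  rewrite conv_DH.
  pose k u v := if [&& u \in U, v \in U & f v < f u] then f u ^+ 2 + f v ^+ 2 else 0.
  have h1 : T (fun u v => b u v ^+ 2) <= 2%:R * T k.
    rewrite -T_scale; apply: T_le => u v; rewrite /b /k.
    case: ifP => _; last by rewrite expr0n /= mulr0.
    have := sqr_ge0 (f u - f v); nra.
  have h2 : T k + T k <= T (fun u v => if (u \in U) && (v \in U) then f u ^+ 2 + f v ^+ 2 else 0).
    rewrite {2}T_swap -T_add; apply: T_le => u v; rewrite /k.
    case: (u \in U); case: (v \in U) => //=; try by rewrite addr0.
    have := fge0 u; have := fge0 v.
    case: ltgtP => h /=; nra.
  have h3 : T (fun u v => if (u \in U) && (v \in U) then f u ^+ 2 + f v ^+ 2 else 0) =
      2%:R * T (fun u v => if (u \in U) && (v \in U) then f v ^+ 2 else 0).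
    rewrite (T_ext (fun u v => if (u \in U) && (v \in U) then f u ^+ 2 + f v ^+ 2 else 0)
      (fun u v => (if (u \in U) && (v \in U) then f u ^+ 2 else 0) +
                  (if (u \in U) && (v \in U) then f v ^+ 2 else 0))); last first.
      by move=> u v; case: ifP; rewrite ?addr0.
    rewrite T_add T_swap.
    rewrite (T_ext (fun u v => if (v \in U) && (u \in U) then f v ^+ 2 else 0)
      (fun u v => if (u \in U) && (v \in U) then f v ^+ 2 else 0)); last first.
      by move=> u v; rewrite andbC.
    lra.
  lra.
have Hab : T (fun u v => a u v ^+ 2) <= T (fun u v => b u v ^+ 2).
  apply: T_le => u v; rewrite /a /b; case: ifP => // /and3P [_ _ h].
  have := fge0 u; have := fge0 v; nra.
pose Bq := T (fun u v => if v \in U then 0 else f u ^+ 2).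
have EGeq : energyG e wt f = energyH e wt U f + Bq.
  rewrite conv_EG conv_EH.
  rewrite (T_ext (fun u v => (f u - f v) ^+ 2)
    (fun u v => ((if (u \in U) && (v \in U) then (f u - f v) ^+ 2 else 0) +
      (if v \in U then 0 else f u ^+ 2)) + (if u \in U then 0 else f v ^+ 2))); last first.
    move=> u v; have Fu : (u \in U) = false -> f u = 0 by move=> h; apply: f0; rewrite h.
    have Fv : (v \in U) = false -> f v = 0 by move=> h; apply: f0; rewrite h.
    case Hu: (u \in U); case Hv: (v \in U) => /=;
      try rewrite (Fu Hu); try rewrite (Fv Hv); ring.
  rewrite !T_add [X in _ + X]T_swap /Bq; lra.
have DHDG : \sum_(v in U) wdegH e wt U v * f v ^+ 2 <= \sum_v wdeg e wt v * f v ^+ 2.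
  rewrite conv_DH conv_DG; apply: T_le => u v; case: ifP => // _; exact: sqr_ge0.
have coarea : Bq <= T (fun u v => a u v * b u v).
  pose ts := sort <=%R (undup [seq f v | v <- enum V & 0 < f v]).
  have pth : path <%R 0 ts.
    rewrite path_sortedE; last exact: lt_trans.
    apply/andP; split; last by rewrite sort_lt_sorted undup_uniq.
    apply/allP => x; rewrite mem_sort mem_undup => /mapP [v].
    by rewrite mem_filter => /andP [hv _] ->.
  have memf : forall v, f v \in 0 :: ts.
    move=> v; rewrite inE; have [->|fv0] := eqVneq (f v) 0; first by rewrite ?eqxx.
    rewrite mem_sort mem_undup; apply/orP; right; apply: map_f.
    by rewrite mem_filter mem_enum andbT lt_neqAle eq_sym fv0 fge0.
  have lcv : forall v, lcsum 0 ts (f v) = f v ^+ 2.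
    by move=> v; rewrite lc_val ?memf // expr0n /= subr0.
  have ineq : \sum_(pt <- zip (0 :: ts) ts) (pt.2 ^+ 2 - pt.1 ^+ 2) *
        wcut e wt (superlevel f pt.2) (~: U) <=
      \sum_(pt <- zip (0 :: ts) ts) (pt.2 ^+ 2 - pt.1 ^+ 2) *
        wcut e wt (superlevel f pt.2) (U :\: superlevel f pt.2).
    rewrite big_seq [X in _ <= X]big_seq; apply: ler_sum => pt ptP.
    have /andP [h1 h2] := allP (lc_pos _ _ pth) pt ptP.
    apply: ler_wpM2l; first by nra.
    by apply: hcut; exact: le_lt_trans h1 h2.
  move: ineq; under eq_bigr do rewrite conv_wcut.
  under [X in _ <= X -> _]eq_bigr do rewrite conv_wcut.
  rewrite !T_sumseq => ineq.
  have -> : Bq = T (fun u v => \sum_(x <- zip (0 :: ts) ts) (x.2 ^+ 2 - x.1 ^+ 2) *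
          (if (u \in superlevel f x.2) && (v \in ~: U) then 1 else 0)).
    rewrite /Bq; apply: T_ext => u v; rewrite in_setC.
    case: (v \in U) => /=.
      by symmetry; apply: big1 => pt _; rewrite andbF mulr0.
    under eq_bigr do rewrite andbT /superlevel inE.
    by rewrite -lcv.
  apply: (le_trans ineq); apply: T_le => u v; rewrite le_eqVlt; apply/orP; left; apply/eqP.
  under eq_bigr do rewrite in_setD /superlevel !inE.
  case Hv: (v \in U); last first.
    by rewrite /a /b Hv andbF /= mul0r; apply: big1 => pt _; rewrite !andbF mulr0.
  have [lt|le] := ltP (f v) (f u); last first.
    rewrite /a /b; have -> : (f v < f u) = false by rewrite ltNge le.
    rewrite !andbF mul0r; apply: big1 => pt _; rewrite andbT.
    case: (leP pt.2 (f u)) => h /=; last by rewrite mulr0.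
    by rewrite (le_trans h le) mulr0.
  have Hu : u \in U.
    apply/negPn/negP => /f0 fu0; have := fge0 v; rewrite fu0 in lt; lra.
  transitivity (lcsum 0 ts (f u) - lcsum 0 ts (f v)).
    rewrite /lcsum -sumrB; apply: eq_bigr => pt _; rewrite -mulrBr andbT; congr (_ * _).
    case: (leP pt.2 (f u)); case: (leP pt.2 (f v)) => /= h1 h2; lra.
  rewrite !lcv /a /b Hu Hv lt /=; ring.
have CS := T_CS a b.
set DH := \sum_(v in U) wdegH e wt U v * f v ^+ 2 in DHpos Hb DHDG *.
set DG := \sum_v wdeg e wt v * f v ^+ 2 in DHDG *.
set EH := energyH e wt U f in EHa EGeq *.
set EG := energyG e wt f in EGeq *.
set A2 := T (fun u v => a u v ^+ 2) in EHa Hab CS.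
set B2 := T (fun u v => b u v ^+ 2) in Hb Hab CS.
set AB := T (fun u v => a u v * b u v) in coarea CS.
have Bq0 : 0 <= Bq by apply: T_ge0 => u v; case: ifP => // _; exact: sqr_ge0.
have A20 : 0 <= A2 by apply: T_ge0 => u v; exact: sqr_ge0.
have key : EG ^+ 2 <= 8%:R * EH * DH.
  have h1 : Bq ^+ 2 <= AB ^+ 2 by rewrite ler_sqr ?nnegrE //; apply: le_trans coarea.
  have h2 : A2 * B2 <= A2 * (2%:R * DH) by apply: ler_wpM2l.
  have h3 : A2 * A2 <= A2 * B2 by apply: ler_wpM2l.
  rewrite EGeq -EHa.
  have := sqr_ge0 (A2 - Bq); nra.
rewrite /RayleighG /RayleighH -/DH -/DG -/EH -/EG.
have DGpos : 0 < DG by apply: lt_le_trans DHDG.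
have EG0 : 0 <= EG by rewrite EGeq -EHa; lra.
set y := EG / DG.
have y0 : 0 <= y by rewrite /y divr_ge0 // ltW.
have yz : y <= EG / DH.
  by rewrite /y ler_pdivrMr // mulrAC ler_pdivlMr // ler_wpM2l.
have yy : y ^+ 2 <= 8%:R * (EH / DH).
  apply: (le_trans (y := (EG / DH) ^+ 2)).
    by rewrite ler_sqr ?nnegrE //; apply: le_trans yz.
  rewrite expr_div_n ler_pdivrMr ?exprn_gt0 //.
  have -> : 8%:R * (EH / DH) * DH ^+ 2 = 8%:R * EH * DH by field; rewrite gt_eqF.
  exact: key.
rewrite -(ger0_norm y0) -sqrtr_sqr; exact: ler_wsqrtr.
Qed.

End Aux.

Theorem mainTheorem10 (R : rcfType) (V : finType) (e : rel V) (wt : V -> V -> R)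
  (U : {set V}) (f : V -> R) :
  weighted_graph e wt ->
  (forall v, 1 <= wdeg e wt v) ->
  (forall v, 0 <= f v) ->
  (forall v, v \notin U -> f v = 0) ->
  0 < \sum_(v in U) wdegH e wt U v * f v ^+ 2 ->
  (forall t, 0 < t ->
     wcut e wt (superlevel f t) (~: U) <=
     wcut e wt (superlevel f t) (U :\: superlevel f t)) ->
  RayleighG e wt f <= Num.sqrt (8%:R * RayleighH e wt U f).
Proof.
move=> [esym _ wsym wpos] _; move: esym wsym wpos.
move=> esym wsym wpos; exact (main_aux R V e wt esym wsym wpos U f).
Qed.
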